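(* Let $X$ be a smooth projective complex variety with $\operatorname{Pic}(X)$ finitely generated, and let $G$ be a finite group acting on $\operatorname{Pic}(X)$ by group automorphisms such that $\chi(gD)=\chi(D)$ for all $g\in G$ and $[D]\in\operatorname{Pic}(X)$. Then there exists a finite set $S\subset\operatorname{Pic}(X)$ such that \[ \operatorname{Pic}^\chi(X,G)=\left\langle \chi(D)\langle D\rangle_G \;\middle|\; [D]\in S\right\rangle . \]
   Context: $\chi(D)$ denotes the Euler–Poincaré characteristic of the line bundle $\mathcal{O}_X(D)$. For $[D]\in\operatorname{Pic}(X)$, $\langle D\rangle_G:=\sum_{[E]\in G\cdot[D]}[E]$ is the sum over the $G$-orbit of $[D]$. $\operatorname{Pic}^\chi(X,G)$ is the subgroup of $\operatorname{Pic}(X)$ generated by $\chi(D)\langle D\rangle_G$ for all $[D]\in\operatorname{Pic}(X)$. *)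

(* Defs.v *)
From HB Require Import structures.
From mathcomp Require Import all_boot all_order all_algebra all_fingroup.
Set Implicit Arguments. Unset Strict Implicit. Unset Printing Implicit Defensive.
Import GRing.Theory.
Local Open Scope ring_scope.

(* Abstract model of Pic(X): an additive abelian group A (zmodType). *)

Definition in_span (A : zmodType) (P : A -> Prop) (x : A) : Prop :=
  exists (n : nat) (v : 'I_n -> A) (c : 'I_n -> int),
    (forall i, P (v i)) /\ x = \sum_(i < n) v i *~ c i.

Definition fin_gen (A : zmodType) : Prop :=
  exists (n : nat) (v : 'I_n -> A), forall a : A,
    exists c : 'I_n -> int, a = \sum_(i < n) v i *~ c i.

Definition is_group_action (gT : finGroupType) (A : zmodType)
    (act : gT -> A -> A) : Prop :=
  [/\ forall g x y, act g (x + y) = act g x + act g y,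
      forall x, act 1%g x = x
    & forall g h x, act (g * h)%g x = act g (act h x)].

Definition orbit_sum (gT : finGroupType) (A : zmodType)
    (act : gT -> A -> A) (D : A) : A :=
  \sum_(E <- undup [seq act g D | g <- enum [set: gT]]) E.

Definition Picchi (gT : finGroupType) (A : zmodType)
    (act : gT -> A -> A) (chi : A -> int) (x : A) : Prop :=
  in_span (fun y => exists D : A, y = orbit_sum act D *~ chi D) x.

(* Main.v *)
Require Import Defs.
From HB Require Import structures.
From mathcomp Require Import all_boot all_order all_algebra all_fingroup.
From Stdlib Require Import Classical.
Import GRing.Theory Num.Theory Order.TTheory.
Local Open Scope ring_scope.
Set Implicit Arguments. Unset Strict Implicit.

Section Gen.
Variable A : zmodType.

Inductive gen (P : A -> Prop) : A -> Prop :=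
| g0 : gen P 0
| gP y : P y -> gen P y
| gB x y : gen P x -> gen P y -> gen P (x - y).

Lemma genN P x : gen P x -> gen P (- x).
Proof. by move=> h; rewrite -sub0r; apply: gB => //; apply: g0. Qed.

Lemma genD P x y : gen P x -> gen P y -> gen P (x + y).
Proof. by move=> hx hy; rewrite -[y]opprK; apply: gB => //; apply: genN. Qed.

Lemma genMn P x n : gen P x -> gen P (x *+ n).
Proof.
move=> hx; elim: n => [|n IH]; first by rewrite mulr0n; apply: g0.
by rewrite mulrS; apply: genD.
Qed.

Lemma genMz P x k : gen P x -> gen P (x *~ k).
Proof.
move=> hx; case: k => n; first by rewrite -pmulrn; apply: genMn.
by rewrite NegzE mulrNz; apply: genN; rewrite -pmulrn; apply: genMn.
Qed.

Lemma gen_trans P Q x : (forall y, P y -> gen Q y) -> gen P x -> gen Q x.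
Proof.
move=> hPQ; elim => [|y Py|u v _ hu _ hv]; [exact: g0 | exact: hPQ | exact: gB].
Qed.

Lemma gen_sum P n (v : 'I_n -> A) (c : 'I_n -> int) :
  (forall i, P (v i)) -> gen P (\sum_(i < n) v i *~ c i).
Proof.
move=> hv; apply: (big_ind (gen P)); [exact: g0 | exact: genD |].
by move=> i _; apply: genMz; apply: gP.
Qed.

Lemma span_gen P x : in_span P x <-> gen P x.
Proof.
split.
  by case=> n [v [c [hv ->]]]; apply: gen_sum.
elim => [|y Py|u w _ [n1 [v1 [c1 [h1 ->]]]] _ [n2 [v2 [c2 [h2 ->]]]]].
- exists 0%N, (fun _ => 0), (fun _ => 0); split; first by case.
  by rewrite big_ord0.
- exists 1%N, (fun _ => y), (fun _ => 1); split => //.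
  by rewrite big_ord1.
- exists (n1 + n2)%N,
    (fun i => match split i with inl j => v1 j | inr j => v2 j end),
    (fun i => match split i with inl j => c1 j | inr j => - c2 j end).
  split.
    by move=> i; case: (split i).
  rewrite big_split_ord /= -sumrN; congr (_ + _); apply: eq_bigr => j _.
    by have /= -> := unsplitK (inl j : 'I_n1 + 'I_n2).
  by have /= -> := unsplitK (inr j : 'I_n1 + 'I_n2); rewrite mulrNz.
Qed.
End Gen.
Lemma l1 (A : zmodType) (x y p q : A) : x - y - (p - q) = (x - p) - (y - q).
Proof. rewrite !opprB addrACA [RHS]addrACA; congr (_ + _). by rewrite addrC. Qed.

Lemma ex_min (P : nat -> Prop) : (exists n, P n) ->
  exists n, P n /\ forall m, P m -> (n <= m)%N.
Proof.
move=> [n0 Pn0]; apply: NNPP => hno.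
suff H : forall n m, (m <= n)%N -> ~ P m by exact: (H n0 n0 (leqnn _) Pn0).
elim => [|n IH] m hm Pm.
  apply: hno; exists m; split => // k _; by rewrite leqn0 in hm; rewrite (eqP hm).
move: hm; rewrite leq_eqVlt => /orP [/eqP em|]; last by move/IH; apply.
apply: hno; exists m; split => // k Pk; rewrite leqNgt; apply/negP => hk.
by apply: (IH k) => //; rewrite -ltnS -em.
Qed.

Section Noeth.
Variable A : zmodType.

Definition subgrp (H : A -> Prop) := H 0 /\ forall x y, H x -> H y -> H (x - y).

Lemma subgrp_gen (H : A -> Prop) x : subgrp H -> gen H x -> H x.
Proof. move=> [h0 hB]; elim => // u v _ hu _ hv; exact: hB. Qed.

Lemma decomp a (s : seq A) h : gen (fun y => y \in a :: s) h ->
  exists k, gen (fun y => y \in s) (h - a *~ k).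
Proof.
elim => [|y|x y _ [kx hx] _ [ky hy]].
- by exists 0; rewrite mulr0z subr0; apply: g0.
- rewrite in_cons => /orP [/eqP ->|ys].
    by exists 1; rewrite mulr1z subrr; apply: g0.
  by exists 0; rewrite mulr0z subr0; apply: gP.
- exists (kx - ky).
  have -> : x - y - a *~ (kx - ky) = (x - a *~ kx) - (y - a *~ ky).
    by rewrite mulrzBr l1.
  exact: gB.
Qed.

Lemma noeth (vs : seq A) (H : A -> Prop) : subgrp H ->
  (forall h, H h -> gen (fun y => y \in vs) h) ->
  exists L : seq A, (forall y, y \in L -> H y) /\
    forall h, H h -> gen (fun y => y \in L) h.
Proof.
elim: vs H => [|a s IH] H sH hH.
  by exists [::]; split.
have [h0 hB] := sH.
pose H' h := H h /\ gen (fun y => y \in s) h.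
have sH' : subgrp H'.
  split; first by split => //; apply: g0.
  by move=> x y [hx gx] [hy gy]; split; [apply: hB|apply: gB].
have [L [LH' HL]] := IH H' sH' (fun h hh => hh.2).
pose I (k : int) := exists h, H h /\ gen (fun y => y \in s) (h - a *~ k).
have Ik : forall h, H h -> exists k, I k /\ gen (fun y => y \in s) (h - a *~ k).
  move=> h hh; have [k hk] := decomp (hH h hh); by exists k; split => //; exists h.
have IN : forall k, I k -> I (- k).
  move=> k [h [hh gh]]; exists (- h); split.
    by rewrite -sub0r; apply: hB.
  by rewrite mulrNz -opprD; apply: genN.
have HM : forall x k, H x -> H (x *~ k).
  move=> x k hx; apply: subgrp_gen => //; apply: genMz; exact: gP.
case: (classic (exists m : nat, (0 < m)%N /\ I m%:Z)) => [ex|nex].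
- have [d [[d0 [w [Hw gw]]] dmin]] := ex_min ex.
  exists (w :: L); split.
    by move=> y; rewrite in_cons => /orP [/eqP ->|/LH' []].
  move=> h hh; have [k [_ gk]] := Ik h hh.
  pose q := (k %/ d%:Z)%Z; pose r := (k %% d%:Z)%Z.
  have Hh2 : H (h - w *~ q) by apply: hB => //; apply: HM.
  have g2 : gen (fun y => y \in s) ((h - w *~ q) - a *~ r).
    have -> : (h - w *~ q) - a *~ r = (h - a *~ k) - (w - a *~ d%:Z) *~ q.
      rewrite mulrzBl -mulrzA -l1 -mulrzBr; congr (_ - _ *~ _).
      apply/eqP; rewrite eq_sym subr_eq [r + _]addrC mulrC; apply/eqP; exact: divz_eq.
    by apply: gB => //; apply: genMz.
  have r0 : r = 0.
    have hr0 : 0 <= r by apply: modz_ge0; rewrite eqz_nat -lt0n.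
    have hrd : r < d%:Z by apply: ltz_pmod; rewrite ltz_nat.
    clearbody r q.
    case: r g2 hr0 hrd => [[|m]|m] g2 hr0 hrd //.
    exfalso; rewrite ltz_nat in hrd.
    have := dmin m.+1 (conj (ltn0Sn _) (ex_intro _ _ (conj Hh2 g2))).
    by rewrite leqNgt hrd.
  rewrite r0 mulr0z subr0 in g2.
  have : gen (fun y => y \in L) (h - w *~ q) by apply: HL.
  move=> gL; rewrite -[h](subrK (w *~ q)); apply: genD.
    by apply: (gen_trans _ gL) => y yL; apply: gP; rewrite in_cons yL orbT.
  by apply: genMz; apply: gP; rewrite in_cons eqxx.
- exists L; split.
    by move=> y /LH' [].
  move=> h hh; apply: HL; split => //.
  have [k [Ik' gk]] := Ik h hh.
  suff k0 : k = 0 by move: gk; rewrite k0 mulr0z subr0.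
  case: k Ik' gk => [[|m]|m] Ik' gk //; exfalso; apply: nex.
    by exists m.+1.
  by exists m.+1; split => //; have := IN _ Ik'; rewrite NegzE opprK.
Qed.
End Noeth.

Section Fin.
Variables (A : zmodType) (f : A -> A).
Definition PS (S : seq A) y := exists2 D : A, D \in S & y = f D.
Definition Pg y := exists D : A, y = f D.

Lemma PS_cat S1 S2 x : gen (PS S1) x -> gen (PS (S1 ++ S2)) x /\ gen (PS (S2 ++ S1)) x.
Proof.
move=> g; split; apply: (gen_trans _ g) => y [D hD ->]; apply: gP; exists D => //;
  by rewrite mem_cat hD ?orbT.
Qed.

Lemma fin1 x : gen Pg x -> exists S, gen (PS S) x.
Proof.
elim => [|y [D ->]|u w _ [S1 g1] _ [S2 g2]].
- by exists [::]; apply: g0.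
- by exists [:: D]; apply: gP; exists D; rewrite ?mem_seq1.
- exists (S1 ++ S2); apply: gB; [exact: (PS_cat S2 g1).1 | exact: (PS_cat S1 g2).2].
Qed.

Lemma finL (L : seq A) : (forall y, y \in L -> gen Pg y) ->
  exists S, forall y, y \in L -> gen (PS S) y.
Proof.
elim: L => [|a L IH] hL; first by exists [::].
have [S1 g1] := fin1 (hL a (mem_head _ _)).
have [S2 g2] := IH (fun y yL => hL y (mem_behead (s := a :: L) yL)).
exists (S1 ++ S2) => y; rewrite in_cons => /orP [/eqP ->|yL].
  exact: (PS_cat S2 g1).1.
exact: (PS_cat S1 (g2 y yL)).2.
Qed.
End Fin.

Theorem theorem5p4 (A : zmodType) (gT : finGroupType)
    (act : gT -> A -> A) (chi : A -> int)
    (hfg : fin_gen A)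
    (hact : is_group_action act)
    (hchi : forall (g : gT) (D : A), chi (act g D) = chi D) :
  exists S : seq A, forall x : A,
    Picchi act chi x <->
    in_span (fun y => exists2 D : A, D \in S & y = orbit_sum act D *~ chi D) x.
Proof.
move: hfg => [n [v hv]].
pose f D := orbit_sum act D *~ chi D.
pose vs := map v (enum 'I_n).
have sH : subgrp (gen (Pg f)).
  by split; [apply: g0 | move=> x y; apply: gB].
have hH : forall h, gen (Pg f) h -> gen (fun y => y \in vs) h.
  move=> h _; have [c ->] := hv h; apply: gen_sum => i.
  by apply: map_f; rewrite mem_enum.
have [L [LH HL]] := noeth sH hH.
have [S hS] := finL LH.
exists S => x; rewrite /Picchi !span_gen; split.
  move=> gx; apply: (gen_trans hS); exact: HL.
apply: gen_trans => y [D hD ->]; apply: gP; by exists D.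
Qed.
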